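(* Let $N\ge1$, $H=(H_1,\dots,H_N)\in]0,1[^N$, $a\in\mathbb{R}^N\setminus\{(0,\dots,0)\}$, let $S^H$ be the mixed sub-fractional Brownian motion with parameters $N,a,H$, let $H_{i_0}=\min\{H_i; i\in\{1,\dots,N\},\ a_i\neq0\}$, and let $0<\epsilon<T$, $I=[\epsilon,T]$. There exists a constant $c>0$ such that for all $s,t\in I$, $$\mathrm{Var}\big(S^H(t)\,\big|\,S^H(s)\big)\ge c\,|s-t|^{2H_{i_0}},$$ where $\mathrm{Var}(Y|Z)$ denotes the conditional variance of $Y$ given $Z$.
   Context: Let $(\Omega,\mathcal F,\mathbb P)$ be a probability space. For $K\in]0,1[$, a fractional Brownian motion on $\mathbb{R}$ with Hurst index $K$ is a continuous centered Gaussian process $\{B^K(t),t\in\mathbb{R}\}$ with $\mathrm{Cov}(B^K(t),B^K(s))=\frac12(|t|^{2K}+|s|^{2K}-|t-s|^{2K})$. The sub-fractional Brownian motion (sfBm) of index $K$ is $\xi^K_t=(B^K_t+B^K_{-t})/\sqrt2$, $t\ge0$; it is a continuous centered Gaussian process with $\mathrm{Cov}(\xi^K_t,\xi^K_s)=s^{2K}+t^{2K}-\frac12\big((s+t)^{2K}+|t-s|^{2K}\big)$. For $N\ge1$, $H\in]0,1[^N$, $a\in\mathbb{R}^N\setminus\{0\}$, the mixed sub-fractional Brownian motion (msfBm) is $S^H(t)=\sum_{i=1}^N a_i\xi^{H_i}(t)$, $t\ge0$, where $\xi^{H_1},\dots,\xi^{H_N}$ are independent sfBms with indices $H_1,\dots,H_N$.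 Since $(S^H(t),S^H(s))$ is a centered Gaussian vector, $\mathrm{Var}(S^H(t)|S^H(s))$ is deterministic and equals $\inf_{b\in\mathbb{R}}\mathbb{E}(S^H(t)-bS^H(s))^2$. *)

(* Defs.v *)
From HB Require Import structures.
From mathcomp Require Import all_boot all_order all_algebra.
From mathcomp Require Import all_classical all_reals all_analysis.
Set Implicit Arguments. Unset Strict Implicit. Unset Printing Implicit Defensive.
Import Order.TTheory GRing.Theory Num.Theory numFieldNormedType.Exports.
Local Open Scope classical_set_scope.
Local Open Scope ring_scope.

Definition sfBm_cov {R : realType} (K s t : R) : R :=
  s `^ (2 * K) + t `^ (2 * K)
  - 2^-1 * ((s + t) `^ (2 * K) + `|t - s| `^ (2 * K)).

Definition centered_gaussian {d} {T : measurableType d} {R : realType}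
  (P : probability T R) (Y : T -> R) : Prop :=
  measurable_fun setT Y /\
  ((exists s : R, 0 < s /\
      forall A : set R, measurable A -> P (Y @^-1` A) = normal_prob 0 s A)
   \/ (forall A : set R, measurable A -> P (Y @^-1` A) = \d_(0 : R) A)).

(* X : R -> T -> R (only times t >= 0 matter) is a sub-fractional Brownian
   motion of index K: continuous paths on [0, +oo), centered Gaussian process
   (every finite linear combination is centered Gaussian), square integrable,
   with covariance sfBm_cov K. *)
Definition is_sfBm {d} {T : measurableType d} {R : realType}
  (P : probability T R) (K : R) (X : R -> T -> R) : Prop :=
  (forall w, {within [set` `[0%R, +oo[], continuous (X^~ w : R -> R)}) /\
  (forall (n : nat) (ts : 'I_n -> R) (cs : 'I_n -> R),
     (forall k, 0 <= ts k) ->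
     centered_gaussian P (fun w => \sum_(k < n) cs k * X (ts k) w)) /\
  (forall t, 0 <= t -> X t \in Lfun P 2) /\
  (forall s t, 0 <= s -> 0 <= t ->
     covariance P (X s) (X t) = (sfBm_cov K s t)%:E).

Definition indep_processes {d} {T : measurableType d} {R : realType}
  (P : probability T R) (N : nat) (X : 'I_N -> R -> T -> R) : Prop :=
  forall (n : nat) (ts : 'I_N -> 'I_n -> R) (B : 'I_N -> 'I_n -> set R),
    (forall i k, 0 <= ts i k) -> (forall i k, measurable (B i k)) ->
    P (\bigcap_(i in [set: 'I_N]) \bigcap_(k in [set: 'I_n])
         (X i (ts i k) @^-1` B i k))
    = (\prod_(i < N) P (\bigcap_(k in [set: 'I_n]) (X i (ts i k) @^-1` B i k)))%E.

Definition msfBm {T : Type} {R : realType} (N : nat) (a : 'I_N -> R)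
  (xi : 'I_N -> R -> T -> R) (t : R) : T -> R :=
  fun w => \sum_(i < N) a i * xi i t w.

(* Conditional variance Var(Y | Z) of a centered Gaussian vector (Y, Z):
   inf_{b in R} E (Y - b Z)^2  (an extended real). *)
Definition cond_var {d} {T : measurableType d} {R : realType}
  (P : probability T R) (Y Z : T -> R) : \bar R :=
  ereal_inf [set ('E_P[(fun w => (Y w - b * Z w) ^+ 2)%R])%E | b in [set: R]].

(* Main.v *)
Require Import Defs.
From HB Require Import structures.
From mathcomp Require Import all_boot all_order all_algebra.
From mathcomp Require Import all_classical all_reals all_analysis.
From mathcomp Require Import ring lra.
Import Order.TTheory GRing.Theory Num.Theory numFieldNormedType.Exports.
Local Open Scope classical_set_scope.
Local Open Scope ring_scope.

Section An1.
Context {R : realType}.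
Implicit Types (K u v x l : R).

Lemma covC K u v : sfBm_cov K u v = sfBm_cov K v u.
Proof. by rewrite /sfBm_cov [u + v]addrC distrC [u `^ _ + _]addrC. Qed.

Lemma cov_scale K l u v : 0 < l -> 0 <= u -> 0 <= v ->
  sfBm_cov K (l * u) (l * v) = l `^ (2 * K) * sfBm_cov K u v.
Proof.
move=> hl hu hv.
rewrite /sfBm_cov -mulrDr -mulrBr normrM gtr0_norm //.
rewrite !powRM ?(ltW hl) ?addr_ge0 //.
set a := l `^ _; set b := u `^ _; set c := v `^ _; set d := (u+v) `^ _.
set e := `|v - u| `^ _; ring.
Qed.

Definition V1 K : R := 2 - 2^-1 * 2 `^ (2 * K).

Lemma cov_diag K u : 0 < K -> 0 <= u -> sfBm_cov K u u = u `^ (2 * K) * V1 K.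
Proof.
move=> hK hu.
rewrite /sfBm_cov /V1 subrr normr0 powR0; last by rewrite mulf_neq0 // gt_eqF.
have -> : u + u = 2 * u by ring.
rewrite powRM //.
set a := u `^ _; set b := 2 `^ _; ring.
Qed.

Lemma powR2K x K : 0 <= x -> x `^ (2 * K) = (x `^ K) ^+ 2.
Proof. by move=> hx; rewrite mulrC powRrM powR_mulrn // powR_ge0. Qed.

Lemma V1_gt0 K : 0 < K < 1 -> 0 < V1 K.
Proof.
case/andP=> hK0 hK1.
have h2 : (2:R) `^ (2 * K) = expR (2 * K * ln 2) by rewrite /powR gt_eqF.
have h4 : (4:R) = expR (2 * ln 2).
  by rewrite mulrC expRM lnK ?posrE // powR_mulrn // -natrX.
have hl : 0 < ln (2:R) by rewrite ln_gt0 // ltr1n.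
have : (2:R) `^ (2 * K) < 4.
  by rewrite h2 h4 ltr_expR; nra.
rewrite /V1; lra.
Qed.

Lemma powR_le_base (a b r : R) : 0 <= r -> 0 <= a -> a <= b -> a `^ r <= b `^ r.
Proof.
move=> hr ha hab; apply: ge0_ler_powR => //; rewrite nnegrE //.
exact: le_trans hab.
Qed.

Lemma powRK (c p : R) : 0 <= c -> 0 < p -> (c `^ p^-1) `^ p = c.
Proof. by move=> hc hp; rewrite -powRrM mulVf ?gt_eqF // powRr1. Qed.

Lemma powR_split u (h : R) : 0 <= u -> u ^+ 2 = u `^ h * u `^ (2 - h).
Proof.
move=> hu; have e : (2:R) = h + (2 - h) by ring.
rewrite -powR_mulrn // [X in u `^ X]e powRD // -e pnatr_eq0 //.
Qed.

End An1.

Section An2.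
Context {R : realType}.
Implicit Types (K u v x l : R).

Lemma near_bound K x d : 0 < K < 1 -> 1 <= x -> x - 1 <= d -> d <= 1 ->
  6 * d <= V1 K -> d `^ (2*K) <= V1 K -> d `^ (2 - 2*K) <= 4^-1 ->
  V1 K / 4 * (x - 1) `^ (2*K) <= V1 K ^+ 2 * x `^ (2*K) - (sfBm_cov K 1 x) ^+ 2.
Proof.
move=> hK hx hxd hd1 hd6 hdh hd2.
have /andP[hK0 hK1] := hK.
have hV := V1_gt0 _ hK.
have h02 : 0 <= 2*K by lra.
have h22 : 2*K <= 2 by lra.
have hu0 : 0 <= x - 1 by lra.
have hy1 : 1 <= x `^ K by have := ler_powR hx (ltW hK0); rewrite powRr0 => h; exact: h.
have hyx : x `^ K <= x := ler1_powR hx (ltW hK1).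
have hxh : x `^ (2*K) = (x `^ K) ^+ 2 by rewrite powR2K //; lra.
have hpsi : sfBm_cov K 1 x
    = 1 + (x `^ K)^+2 - 2^-1 * ((1 + x) `^ (2*K) + (x - 1) `^ (2*K)).
  by rewrite /sfBm_cov powR1 /= hxh ger0_norm.
have hB0 : 0 <= (2:R) `^ (2*K) := powR_ge0 _ _.
have hB4 : (2:R) `^ (2*K) <= 4.
  have := @ler_powR _ 2 (ler1n _ 2) (2*K) 2 h22.
  rewrite powR_mulrn ?ler0n // => h; nra.
have hAlow : (2:R) `^ (2*K) * x `^ K <= (1 + x) `^ (2*K).
  have e1 : (2:R) `^ (2*K) = 4 `^ K by rewrite powRrM powR_mulrn ?ler0n // -natrX.
  have e2 : (1 + x) `^ (2*K) = ((1 + x) ^+ 2) `^ K by rewrite powRrM powR_mulrn //; lra.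
  have e3 : (4:R) `^ K * x `^ K = (4 * x) `^ K by rewrite powRM //; lra.
  rewrite e1 e3 e2; apply: powR_le_base; [lra | lra | nra].
have hAup : (1 + x) `^ (2*K) - (2:R) `^ (2*K) <= 6 * (x - 1).
  have eb : 1 + x = 2 * ((1 + x) / 2) by rewrite mulrC divfK // pnatr_eq0.
  have hb1 : 1 <= (1 + x) / 2 by rewrite ler_pdivlMr //; lra.
  have hbh : ((1 + x) / 2) `^ (2*K) <= ((1 + x) / 2) ^+ 2.
    have := @ler_powR _ _ hb1 (2*K) 2 h22.
    by rewrite powR_mulrn; [move=> h; exact: h | lra].
  have hbl : 1 <= ((1 + x) / 2) `^ (2*K).
    by have := @ler_powR _ _ hb1 0 (2*K) h02; rewrite powRr0 => h; exact: h.
  rewrite [X in X `^ _ - _]eb powRM; [|lra|lra].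
  move: hbl hbh hB4 hB0 hb1.
  set b := (1 + x) / 2; set bh := b `^ _; set B := 2 `^ _.
  move=> hbl hbh hB4 hB0 hb1.
  have hbu : b = 1 + (x - 1) / 2 by rewrite /b; field.
  have h1 : B * (bh - 1) <= 4 * (bh - 1) by nra.
  have h2 : b ^+ 2 - 1 <= 5 / 4 * (x - 1) by rewrite hbu; nra.
  nra.
have huh : (x - 1) `^ (2*K) <= V1 K.
  by apply: le_trans hdh; apply: powR_le_base => //; lra.
have huq : (x - 1) `^ (2 - 2*K) <= 4^-1.
  by apply: le_trans hd2; apply: powR_le_base => //; lra.
have hu2 := powR_split _ (2*K) hu0.
have huh0 : 0 <= (x - 1) `^ (2*K) := powR_ge0 _ _.
have huq0 : 0 <= (x - 1) `^ (2 - 2*K) := powR_ge0 _ _.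
have hVe : V1 K = 2 - 2^-1 * (2:R) `^ (2*K) by [].
rewrite hpsi hxh.
move: hAlow hAup huh huq hu2 huh0 huq0 hVe hB0 hB4 hy1 hyx hu0 hxd hd1 hd6 hV.
set A := (1 + x) `^ _; set B := 2 `^ _; set y := x `^ K; set uh := (x - 1) `^ (2*K).
set q := (x - 1) `^ (2 - 2*K); set u := x - 1; set V := V1 K.
move=> hAlow hAup huh huq hu2 huh0 huq0 hVe hB0 hB4 hy1 hyx hu0 hxd hd1 hd6 hV.
have hyu : (y - 1) ^+ 2 <= u ^+ 2 by rewrite /u; nra.
set F := V * y - (1 + y ^+ 2 - 2^-1 * (A + uh)).
have hF : F = 2^-1 * uh + 2^-1 * (A - B * y) - (y - 1) ^+ 2 by rewrite /F hVe; ring.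
have hFlo : uh / 4 <= F.
  have : u ^+ 2 <= uh / 4 by rewrite hu2; nra.
  rewrite hF; nra.
have hFhi : F <= V.
  have : B <= B * y by nra.
  rewrite hF; nra.
have hD : V ^+ 2 * y ^+ 2 - (1 + y ^+ 2 - 2^-1 * (A + uh)) ^+ 2
        = F * (2 * V * y - F) by rewrite /F; ring.
rewrite hD.
have : V <= 2 * V * y - F by nra.
nra.
Qed.

Lemma psi_small K r : 0 < K < 1 -> 0 < r < 1 ->
  (sfBm_cov K 1 r) ^+ 2 <= (r `^ (2*K) + 2 * r) ^+ 2.
Proof.
move=> /andP[hK0 hK1] /andP[hr0 hr1].
have h02 : 0 <= 2*K by lra.
have h22 : 2*K <= 2 by lra.
have hn : `|r - 1| = 1 - r by rewrite distrC ger0_norm //; lra.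
rewrite /sfBm_cov powR1 /= hn.
have hr1' : 1 <= 1 + r by lra.
have a1 : 1 <= (1 + r) `^ (2*K).
  by have := @ler_powR _ _ hr1' 0 (2*K) h02; rewrite powRr0 => h; exact: h.
have a2 : (1 + r) `^ (2*K) <= (1 + r) ^+ 2.
  have := @ler_powR _ _ hr1' (2*K) 2 h22.
  by rewrite powR_mulrn; [move=> h; exact: h | lra].
have hb : 0 < 1 - r <= 1 by apply/andP; split; lra.
have b1 : (1 - r) `^ (2*K) <= 1.
  by have := @ger_powR _ _ hb 0 (2*K) h02; rewrite powRr0 => h; exact: h.
have b2 : (1 - r) ^+ 2 <= (1 - r) `^ (2*K).
  have := @ger_powR _ _ hb (2*K) 2 h22.
  by rewrite powR_mulrn; [move=> h; exact: h | lra].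
have c0 : 0 <= r `^ (2*K) := powR_ge0 _ _.
move: a1 a2 b1 b2 c0.
set p := r `^ _; set a := (1 + r) `^ _; set b := (1 - r) `^ _.
move=> a1 a2 b1 b2 c0.
have h1 : -(p + 2 * r) <= 1 + p - 2^-1 * (a + b) by nra.
have h2 : 1 + p - 2^-1 * (a + b) <= p + 2 * r by nra.
nra.
Qed.

End An2.

Section An3.
Context {R : realType}.
Implicit Types (K u v x l : R).

Lemma eqle (x y : R) : x = y -> x <= y. Proof. by move=> ->. Qed.

Definition psd3 K := forall u1 u2 u3 c1 c2 c3 : R, 0 <= u1 -> 0 <= u2 -> 0 <= u3 ->
  0 <= c1 ^+ 2 * sfBm_cov K u1 u1 + c2 ^+ 2 * sfBm_cov K u2 u2
       + c3 ^+ 2 * sfBm_cov K u3 u3 + 2 * c1 * c2 * sfBm_cov K u1 u2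
       + 2 * c1 * c3 * sfBm_cov K u1 u3 + 2 * c2 * c3 * sfBm_cov K u2 u3.

Definition Dx K x := V1 K ^+ 2 * x `^ (2*K) - (sfBm_cov K 1 x) ^+ 2.

Lemma D_pos K x : 0 < K < 1 -> psd3 K -> 1 < x -> 0 < Dx K x.
Proof.
move=> hK hP hx.
have /andP[hK0 hK1] := hK.
have hV := V1_gt0 _ hK.
have hx0 : 0 <= x by lra.
have c11 : sfBm_cov K 1 1 = V1 K by rewrite cov_diag // powR1 /= mul1r.
have cxx : sfBm_cov K x x = x `^ (2*K) * V1 K := cov_diag _ _ hK0 hx0.
have hD0 : 0 <= Dx K x.
  have := hP 1 x 0 (sfBm_cov K 1 x) (- V1 K) 0 ler01 hx0 (lexx 0).
  rewrite c11 cxx => H.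
  rewrite -(pmulr_rge0 _ hV); apply: le_trans H _; rewrite /Dx.
  set g := sfBm_cov K 1 x; set g1 := sfBm_cov K 1 0; set g2 := sfBm_cov K x 0.
  set g3 := sfBm_cov K 0 0; set xh := x `^ _; set V := V1 K.
  apply: eqle; ring.
rewrite lt_def hD0 andbT; apply/negP => /eqP hD.
have hxh0 : 0 < x `^ (2*K) by apply: powR_gt0; lra.
have key : forall r, 0 < r ->
    V1 K * sfBm_cov K x r = sfBm_cov K 1 x * sfBm_cov K 1 r.
  move=> r hr.
  have hVr : 0 < sfBm_cov K r r.
    by rewrite (cov_diag _ _ hK0 (ltW hr)); apply: mulr_gt0 => //; apply: powR_gt0.
  have := hP x 1 r (V1 K * sfBm_cov K r r) (- (sfBm_cov K r r * sfBm_cov K 1 x))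
    (- (V1 K * sfBm_cov K x r - sfBm_cov K 1 x * sfBm_cov K 1 r)) hx0 ler01 (ltW hr).
  rewrite c11 cxx (covC K x 1).
  move: hD hVr; rewrite /Dx.
  set V := V1 K; set g := sfBm_cov K 1 x; set xh := x `^ _; set gr := sfBm_cov K r r.
  set gxr := sfBm_cov K x r; set g1r := sfBm_cov K 1 r.
  move=> hD hVr H.
  have E : 0 <= - (gr * (V * gxr - g * g1r) ^+ 2).
    apply: le_trans H _; apply: eqle.
    have -> : - (gr * (V * gxr - g * g1r) ^+ 2)
      = gr ^+ 2 * V * (V ^+ 2 * xh - g ^+ 2) - gr * (V * gxr - g * g1r) ^+ 2.
      by rewrite hD; ring.
    ring.
  have : (V * gxr - g * g1r) ^+ 2 <= 0.
    by rewrite -(pmulr_rle0 _ hVr); lra.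
  have := sqr_ge0 (V * gxr - g * g1r).
  move=> h1 h2; have /eqP : (V * gxr - g * g1r) ^+ 2 = 0 by apply/eqP; rewrite eq_le h2 h1.
  by rewrite sqrf_eq0 subr_eq0 => /eqP.
have scal : forall rho, 0 < rho ->
    V1 K * x `^ (2*K) * sfBm_cov K 1 rho = sfBm_cov K 1 x * sfBm_cov K 1 (x * rho).
  move=> rho hrho.
  rewrite -key; last by apply: mulr_gt0 => //; lra.
  have e := cov_scale K x 1 rho (ltac:(lra) : 0 < x) ler01 (ltW hrho).
  rewrite mulr1 in e; rewrite e; ring.
have hDe : (sfBm_cov K 1 x) ^+ 2 = V1 K ^+ 2 * x `^ (2*K).
  by move: hD; rewrite /Dx => /eqP; rewrite subr_eq0 => /eqP.
have hstep : forall rho, 0 < rho ->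
    (sfBm_cov K 1 (x * rho)) ^+ 2 = V1 K ^+ 2 * (x * rho) `^ (2*K) ->
    (sfBm_cov K 1 rho) ^+ 2 = V1 K ^+ 2 * rho `^ (2*K).
  move=> rho hrho h.
  have e1 := scal rho hrho.
  have hxr : (x * rho) `^ (2*K) = x `^ (2*K) * rho `^ (2*K) by rewrite powRM //; lra.
  rewrite hxr in h.
  have nz : (V1 K * x `^ (2*K)) ^+ 2 != 0.
    by rewrite expf_neq0 // mulf_neq0 // gt_eqF.
  apply/eqP; rewrite -subr_eq0; apply/eqP.
  apply: (mulfI nz); rewrite mulr0.
  move: e1 h hDe.
  set V := V1 K; set g := sfBm_cov K 1 x; set xh := x `^ _; set a := sfBm_cov K 1 rho.
  set b := sfBm_cov K 1 (x * rho); set rh := rho `^ _.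
  move=> e1 h hDe.
  have -> : (V * xh) ^+ 2 * (a ^+ 2 - V ^+ 2 * rh)
      = (V * xh * a) ^+ 2 - V ^+ 2 * xh * (V ^+ 2 * (xh * rh)) by ring.
  by rewrite e1 exprMn h hDe; ring.
set y := x^-1.
have hy0 : 0 < y by rewrite invr_gt0; lra.
have hy1 : y < 1 by rewrite invf_lt1 //; lra.
have hxy : x * y = 1 by rewrite /y mulfV // gt_eqF //; lra.
have Eall : forall n, (sfBm_cov K 1 (y ^+ n)) ^+ 2 = V1 K ^+ 2 * (y ^+ n) `^ (2*K).
  elim=> [|n IH]; first by rewrite expr0 c11 powR1 /= mulr1.
  apply: hstep; first exact: exprn_gt0.
  by rewrite [y ^+ n.+1]exprS mulrA hxy mul1r.
set V := V1 K.
set h := 2 * K.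
have hh : 0 < h by rewrite /h; lra.
have hh2 : 0 < 2 - h by rewrite /h; lra.
have hV8 : 0 < V ^+ 2 / 8 by apply: divr_gt0 => //; apply: exprn_gt0.
have hV32 : 0 < V ^+ 2 / 32 by apply: divr_gt0 => //; apply: exprn_gt0.
set a1 := (V ^+ 2 / 8) `^ h^-1.
set a2 := (V ^+ 2 / 32) `^ (2 - h)^-1.
have ha1 : 0 < a1 by apply: powR_gt0.
have ha2 : 0 < a2 by apply: powR_gt0.
set r0 := Num.min (Num.min a1 a2) (2^-1).
have hr0 : 0 < r0 by rewrite !lt_min ha1 ha2 invr_gt0 ltr0n.
have hya : `|y| < 1 by rewrite gtr0_norm.
have [N _ HN] := cvgr0_norm_lt _ (cvg_expr hya) _ hr0.
have := HN N.+1 (leqnSn N); rewrite /= gtr0_norm ?exprn_gt0 //.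
set rho := y ^+ N.+1 => hrho.
have hrho0 : 0 < rho by apply: exprn_gt0.
have hr1 : rho <= a1 by apply: ltW; apply: (lt_le_trans hrho); rewrite !ge_min lexx.
have hr2 : rho <= a2 by apply: ltW; apply: (lt_le_trans hrho); rewrite !ge_min lexx !orbT.
have hr3 : rho < 1.
  apply: (lt_le_trans hrho); apply: le_trans (_ : 2^-1 <= 1); last by rewrite invf_le1 // ler1n.
  by rewrite !ge_min lexx !orbT.
have hps := psi_small _ _ hK (ltac:(apply/andP; split => //) : 0 < rho < 1).
rewrite Eall in hps.
have hq1 : rho `^ h <= V ^+ 2 / 8.
  have := powR_le_base rho a1 h (ltW hh) (ltW hrho0) hr1.
  by rewrite /a1 (powRK _ _ (ltW hV8) hh).
have hq2 : rho `^ (2 - h) <= V ^+ 2 / 32.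
  have := powR_le_base rho a2 (2 - h) (ltW hh2) (ltW hrho0) hr2.
  by rewrite /a2 (powRK _ _ (ltW hV32) hh2).
have hsp := powR_split _ h (ltW hrho0).
have hrh : 0 < rho `^ h by apply: powR_gt0.
have hq0 : 0 <= rho `^ (2 - h) := powR_ge0 _ _.
move: hps hq1 hq2 hsp hrh hq0.
rewrite -/h -/V.
set p := rho `^ h; set q := rho `^ (2 - h).
move=> hps hq1 hq2 hsp hrh hq0.
have h3 : (p + 2 * rho) ^+ 2 <= 2 * p ^+ 2 + 8 * (p * q).
  by rewrite -hsp; have := sqr_ge0 (p - 2 * rho); nra.
have h4 : p * (V ^+ 2 - 2 * p - 8 * q) <= 0 by nra.
have h5 : V ^+ 2 - 2 * p - 8 * q <= 0 by rewrite -(pmulr_rle0 _ hrh).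
have : 0 < V ^+ 2 by apply: exprn_gt0.
lra.
Qed.

End An3.

Section An4.
Context {R : realType}.
Implicit Types (K u v x l : R).

Lemma cont_powR (h z : R) : 0 < z -> {for z, continuous (fun t : R => t `^ h)}.
Proof.
move=> hz; apply: differentiable_continuous; apply/derivable1_diffP.
by apply: derivable_powR; rewrite in_itv /= hz.
Qed.

Lemma cont_pow (h : R) (g : R -> R) z : 0 < g z -> {for z, continuous g} ->
  {for z, continuous (fun t : R => g t `^ h)}.
Proof.
move=> gz cg.
have -> : (fun t : R => g t `^ h) = (fun a : R => a `^ h) \o g by [].
by apply: continuous_comp => //; apply: cont_powR.
Qed.

Lemma D_cont K a b : 1 < a -> {within `[a, b], continuous (Dx K)}.
Proof.
move=> ha; apply: continuous_in_subspaceT => x.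
rewrite inE /= in_itv /= => /andP[hax _].
have hx : 1 < x by lra.
have cid : {for x, continuous (fun t : R => t)} by exact: cvg_id.
have ccst : forall c : R, {for x, continuous (fun _ : R => c)}.
  by move=> c; exact: cvg_cst.
have e : Dx K = (fun t => V1 K ^+ 2) \* (fun t => t `^ (2*K))
   - ((fun t => sfBm_cov K 1 t) \* (fun t => sfBm_cov K 1 t)).
  by apply/funext => t; rewrite /Dx /= expr2.
have cpsi : {for x, continuous (fun t => sfBm_cov K 1 t)}.
  have e2 : (fun t => sfBm_cov K 1 t) = ((fun _ => 1 `^ (2*K)) + (fun t => t `^ (2*K)))
     - ((fun _ => 2^-1) \* ((fun t => (1 + t) `^ (2*K)) + (fun t => `|t - 1| `^ (2*K)))).
    by apply/funext => t; rewrite /sfBm_cov.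
  rewrite e2.
  apply: continuousB; first apply: continuousD.
  - exact: ccst.
  - by apply: cont_powR; lra.
  apply: continuousM; first exact: ccst.
  apply: continuousD.
  - apply: (cont_pow _ (fun t => 1 + t)); first by simpl; lra.
    have -> : (fun t : R => 1 + t) = (fun _ => 1) + (fun t => t) by [].
    by apply: continuousD.
  - apply: (cont_pow _ (fun t => `|t - 1|)); first by rewrite /= normr_gt0 subr_eq0 gt_eqF.
    have -> : (fun t : R => `|t - 1|) = (fun y : R => `|y|) \o (fun t : R => t - 1) by [].
    apply: continuous_comp; last exact: norm_continuous.
      have -> : (fun t : R => t - 1) = (fun t => t) - (fun _ => 1) by [].
      by apply: continuousB.
rewrite e; apply: continuousB; apply: continuousM => //.
  by apply: cont_powR; lra.
Qed.

Lemma far_bound K d M : 0 < K < 1 -> psd3 K -> 0 < d ->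
  exists2 m0, 0 < m0 & forall x, 1 + d <= x <= M -> m0 <= Dx K x.
Proof.
move=> hK hP hd.
case: (lerP (1 + d) M) => hM.
- have [c hc hmin] := EVT_min hM (D_cont K (1 + d) M (ltac:(lra) : 1 < 1 + d)).
  exists (Dx K c).
    apply: D_pos => //; move: hc; rewrite in_itv /= => /andP[h1 _]; lra.
  by move=> x hx; apply: hmin; rewrite in_itv /=.
- by exists 1 => // x /andP[h1 h2]; lra.
Qed.

Lemma x_bound K M : 0 < K < 1 -> psd3 K -> 1 <= M ->
  exists2 c1, 0 < c1 & forall x, 1 <= x <= M -> c1 * (x - 1) `^ (2*K) <= Dx K x.
Proof.
move=> hK hP hM.
have /andP[hK0 hK1] := hK.
have hV := V1_gt0 _ hK.
set V := V1 K; set h := 2 * K.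
have hh : 0 < h by rewrite /h; lra.
have hh2 : 0 < 2 - h by rewrite /h; lra.
set d1 := V `^ h^-1.
set d2 := (4^-1 : R) `^ (2 - h)^-1.
have hd1 : 0 < d1 by apply: powR_gt0.
have hd2 : 0 < d2 by apply: powR_gt0; rewrite invr_gt0 ltr0n.
set d := Num.min (Num.min 1 (V / 6)) (Num.min d1 d2).
have hd : 0 < d by rewrite !lt_min ltr01 hd1 hd2 divr_gt0.
have hdle1 : d <= 1 by rewrite /d !ge_min lexx.
have hdle6 : 6 * d <= V.
  have : d <= V / 6 by rewrite /d !ge_min lexx !orbT.
  by rewrite ler_pdivlMr //; lra.
have hdd1 : d <= d1 by rewrite /d !ge_min lexx !orbT.
have hdd2 : d <= d2 by rewrite /d !ge_min lexx !orbT.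
have hdh : d `^ h <= V.
  have := powR_le_base d d1 h (ltW hh) (ltW hd) hdd1.
  by rewrite /d1 (powRK _ _ (ltW hV) hh).
have hdq : d `^ (2 - h) <= 4^-1.
  have := powR_le_base d d2 (2 - h) (ltW hh2) (ltW hd) hdd2.
  by rewrite /d2 (powRK _ _ _ hh2) // invr_ge0 ler0n.
have [m0 hm0 hfar] := far_bound _ _ M hK hP hd.
have hPM : 0 < (1 + M) `^ h by apply: powR_gt0; lra.
exists (Num.min (V / 4) (m0 / (1 + M) `^ h)).
  by rewrite lt_min !divr_gt0.
move=> x /andP[hx1 hxM].
have hw0 : 0 <= (x - 1) `^ h := powR_ge0 _ _.
case: (lerP (x - 1) d) => hxd.
- have := near_bound _ _ _ hK hx1 hxd hdle1 hdle6 hdh hdq.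
  rewrite -/V -/h => hnb; apply: le_trans hnb.
  apply: ler_wpM2r => //; rewrite ge_min lexx //.
- have hf := hfar x (ltac:(apply/andP; split; lra)).
  have hwP : (x - 1) `^ h <= (1 + M) `^ h by apply: powR_le_base; lra.
  apply: le_trans hf.
  apply: le_trans (_ : m0 / (1 + M) `^ h * (x - 1) `^ h <= m0).
    by apply: ler_wpM2r => //; rewrite ge_min lexx orbT.
  rewrite mulrAC ler_pdivrMr //; apply: ler_wpM2l => //; lra.
Qed.

End An4.

Section An5.
Context {R : realType}.
Implicit Types (K u v x l : R).

Lemma ord_bound K eps T : 0 < K < 1 -> psd3 K -> 0 < eps -> eps <= T ->
  exists2 c, 0 < c & forall u v, eps <= u -> u <= v -> v <= T ->
    c * (v - u) `^ (2*K) <= sfBm_cov K u u * sfBm_cov K v v - (sfBm_cov K u v) ^+ 2.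
Proof.
move=> hK hP he heT.
have /andP[hK0 hK1] := hK.
have hM : 1 <= T / eps by rewrite ler_pdivlMr // mul1r.
have [c1 hc1 hx] := x_bound _ _ hK hP hM.
have heh : 0 < eps `^ (2*K) by apply: powR_gt0.
exists (eps `^ (2*K) * c1); first exact: mulr_gt0.
move=> u v heu huv hvT.
have hu : 0 < u by lra.
set x := v / u.
have ev : v = u * x by rewrite /x mulrC divfK // gt_eqF.
have hx1 : 1 <= x by rewrite /x ler_pdivlMr // mul1r.
have hxM : x <= T / eps.
  rewrite /x ler_pdivrMr // mulrAC ler_pdivlMr //.
  by apply: ler_pM; lra.
have e1 : sfBm_cov K u u = u `^ (2*K) * sfBm_cov K 1 1.
  by rewrite -cov_scale ?mulr1 //; lra.
have e2 : sfBm_cov K v v = u `^ (2*K) * sfBm_cov K x x.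
  by rewrite ev -cov_scale //; lra.
have e3 : sfBm_cov K u v = u `^ (2*K) * sfBm_cov K 1 x.
  by rewrite ev -cov_scale ?mulr1 //; lra.
have c11 : sfBm_cov K 1 1 = V1 K by rewrite cov_diag // powR1 /= mul1r.
have cxx : sfBm_cov K x x = x `^ (2*K) * V1 K by rewrite cov_diag //; lra.
have ew : (v - u) `^ (2*K) = u `^ (2*K) * (x - 1) `^ (2*K).
  by rewrite -powRM; [congr (_ `^ _); rewrite ev; ring | lra | lra].
have hb := hx x (ltac:(apply/andP; split => //)).
rewrite e1 e2 e3 c11 cxx ew.
move: hb; rewrite /Dx.
have heu' : eps `^ (2*K) <= u `^ (2*K) by apply: powR_le_base; lra.
have hw0 : 0 <= (x - 1) `^ (2*K) := powR_ge0 _ _.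
move: heu' hw0.
set uh := u `^ _; set eh := eps `^ _; set w := (x - 1) `^ _; set xh := x `^ _.
set V := V1 K; set g := sfBm_cov K 1 x.
move=> heu' hw0 hb.
have huh0 : 0 <= uh by rewrite /uh; apply: powR_ge0.
have : eh * c1 * (uh * w) <= uh * c1 * (uh * w).
  by apply: ler_wpM2r; [apply: mulr_ge0 | apply: ler_wpM2r; lra].
have : uh * c1 * (uh * w) <= uh * uh * (V ^+ 2 * xh - g ^+ 2).
  have -> : uh * c1 * (uh * w) = uh * uh * (c1 * w) by ring.
  by apply: ler_wpM2l => //; apply: mulr_ge0.
move=> h1 h2.
apply: le_trans h2 _; apply: le_trans h1 _; apply: eqle; ring.
Qed.

Lemma st_bound K eps T : 0 < K < 1 -> psd3 K -> 0 < eps -> eps <= T ->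
  exists2 c, 0 < c & forall s t b, eps <= s <= T -> eps <= t <= T ->
    c * `|s - t| `^ (2*K) <=
      sfBm_cov K t t - 2 * b * sfBm_cov K t s + b ^+ 2 * sfBm_cov K s s.
Proof.
move=> hK hP he heT.
have /andP[hK0 hK1] := hK.
have hV := V1_gt0 _ hK.
have [c0 hc0 hord] := ord_bound _ _ _ hK hP he heT.
have hTh : 0 < T `^ (2*K) by apply: powR_gt0; lra.
exists (c0 / (T `^ (2*K) * V1 K)); first by apply: divr_gt0 => //; apply: mulr_gt0.
move=> s t b /andP[hes hsT] /andP[het htT].
have hD : c0 * `|s - t| `^ (2*K) <=
    sfBm_cov K s s * sfBm_cov K t t - (sfBm_cov K t s) ^+ 2.
  case: (lerP s t) => hst.
  - rewrite (covC K t s).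
    by apply: hord.
  - rewrite [sfBm_cov K s s * _]mulrC.
    by apply: hord => //; exact: ltW.
have hA : sfBm_cov K s s = s `^ (2*K) * V1 K by rewrite cov_diag //; lra.
have hAle : sfBm_cov K s s <= T `^ (2*K) * V1 K.
  by rewrite hA; apply: ler_wpM2r; [lra | apply: powR_le_base; lra].
have hA0 : 0 < sfBm_cov K s s by rewrite hA; apply: mulr_gt0 => //; apply: powR_gt0; lra.
have hw0 : 0 <= c0 * `|s - t| `^ (2*K) by apply: mulr_ge0; [lra | apply: powR_ge0].
move: hD hAle hA0 hw0.
set A := sfBm_cov K s s; set C := sfBm_cov K t t; set B := sfBm_cov K t s.
set w := c0 * _; set P := T `^ _ * _.
move=> hD hAle hA0 hw0.
have hPpos : 0 < P by rewrite /P; apply: mulr_gt0.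
have eQ : A * (C - 2 * b * B + b ^+ 2 * A) = (b * A - B) ^+ 2 + (A * C - B ^+ 2) by ring.
have hQ : w <= A * (C - 2 * b * B + b ^+ 2 * A).
  by rewrite eQ; apply: le_trans hD _; rewrite lerDr sqr_ge0.
have hQ0 : 0 <= C - 2 * b * B + b ^+ 2 * A.
  by rewrite -(pmulr_rge0 _ hA0); apply: le_trans hQ.
rewrite mulrAC ler_pdivrMr //.
apply: le_trans hQ _.
by rewrite [X in X <= _]mulrC; apply: ler_wpM2l.
Qed.

End An5.

Section Pr1.
Context {d} {T : measurableType d} {R : realType} (P : probability T R).

Definition cv (X Y : T -> R) : R := fine (covariance P X Y).

Lemma L2_L1 (X : T -> R) : X \in Lfun P 2%:E -> X \in Lfun P 1.
Proof. by apply: Lfun_subset12; exact: fin_num_measure. Qed.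

Lemma L2Z (X : T -> R) (a : R) : X \in Lfun P 2%:E -> (a \o* X) \in Lfun P 2%:E.
Proof. by move=> hX; apply: Lfun_scale => //; rewrite ler1n. Qed.

Lemma L2D (X Y : T -> R) : X \in Lfun P 2%:E -> Y \in Lfun P 2%:E ->
  (X \+ Y) \in Lfun P 2%:E.
Proof.
move=> hX hY; have -> : X \+ Y = X + Y by apply/funext.
have p1 : (1 <= 2%:E :> \bar R)%E by rewrite lee_fin ler1n.
exact: (Lfun_addr_closed P p1).2 X Y hX hY.
Qed.

Lemma L2_0 : (0 : T -> R) \in Lfun P 2%:E.
Proof.
have p1 : (1 <= 2%:E :> \bar R)%E by rewrite lee_fin ler1n.
exact: (Lfun_addr_closed P p1).1.
Qed.

Lemma L2_sum (I : Type) (r : seq I) (p : pred I) (F : I -> T -> R) :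
  (forall i, F i \in Lfun P 2%:E) -> (\sum_(i <- r | p i) F i) \in Lfun P 2%:E.
Proof.
move=> hF; elim: r => [|i r IH]; first by rewrite big_nil; exact: L2_0.
rewrite big_cons; case: (p i) => //.
exact: L2D.
Qed.

Lemma cvE (X Y : T -> R) : X \in Lfun P 2%:E -> Y \in Lfun P 2%:E ->
  covariance P X Y = (cv X Y)%:E.
Proof.
move=> hX hY; rewrite /cv fineK //.
by apply: covariance_fin_num; [exact: L2_L1|exact: L2_L1|exact: Lfun2_mul_Lfun1].
Qed.

Lemma cvC (X Y : T -> R) : cv X Y = cv Y X.
Proof. by rewrite /cv covarianceC. Qed.

Lemma cvDl (X Y Z : T -> R) : X \in Lfun P 2%:E -> Y \in Lfun P 2%:E ->
  Z \in Lfun P 2%:E -> cv (X \+ Y) Z = cv X Z + cv Y Z.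
Proof.
move=> hX hY hZ; apply: EFin_inj.
by rewrite EFinD -!cvE ?L2D // covarianceDl.
Qed.

Lemma cvDr (X Y Z : T -> R) : X \in Lfun P 2%:E -> Y \in Lfun P 2%:E ->
  Z \in Lfun P 2%:E -> cv X (Y \+ Z) = cv X Y + cv X Z.
Proof. by move=> hX hY hZ; rewrite cvC cvDl // !(cvC X). Qed.

Lemma cvZl (X Y : T -> R) a : X \in Lfun P 2%:E -> Y \in Lfun P 2%:E ->
  cv (a \o* X) Y = a * cv X Y.
Proof.
move=> hX hY; apply: EFin_inj.
rewrite EFinM -!cvE ?L2Z // covarianceZl //; try exact: L2_L1.
exact: Lfun2_mul_Lfun1.
Qed.

Lemma cvZr (X Y : T -> R) a : X \in Lfun P 2%:E -> Y \in Lfun P 2%:E ->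
  cv X (a \o* Y) = a * cv X Y.
Proof. by move=> hX hY; rewrite cvC cvZl // cvC. Qed.

Lemma cv_ge0 (X : T -> R) : 0 <= cv X X.
Proof. by rewrite /cv; apply: fine_ge0; exact: variance_ge0. Qed.

Lemma cv0r (X : T -> R) : cv X 0 = 0.
Proof.
by rewrite /cv (_ : (0 : T -> R) = cst 0) // covariance_cst_r.
Qed.

Lemma cv_sumr (I : Type) (r : seq I) (p : pred I) (F : I -> T -> R) (X : T -> R) :
  X \in Lfun P 2%:E -> (forall i, F i \in Lfun P 2%:E) ->
  cv X (\sum_(i <- r | p i) F i) = \sum_(i <- r | p i) cv X (F i).
Proof.
move=> hX hF; elim: r => [|i r IH]; first by rewrite !big_nil cv0r.
rewrite !big_cons; case: (p i) => //.
rewrite -IH; apply: cvDr => //.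
exact: L2_sum.
Qed.

Lemma E_sq_ge (W : T -> R) : W \in Lfun P 2%:E ->
  ((cv W W)%:E <= 'E_P[(fun w => (W w) ^+ 2)%R])%E.
Proof.
move=> hW.
have h := varianceE hW.
rewrite /variance cvE // in h.
have f1 : ('E_P[W ^+ 2])%E \is a fin_num.
  apply: expectation_fin_num; rewrite expr2; exact: Lfun2_mul_Lfun1.
have f2 : ('E_P[W])%E \is a fin_num by apply: expectation_fin_num; exact: L2_L1.
have e : cv W W = fine ('E_P[W ^+ 2])%E - (fine ('E_P[W])%E) ^+ 2.
  by apply: EFin_inj; rewrite h EFinB EFin_expe !fineK.
rewrite -exprfctE -(fineK f1) lee_fin e.
have := sqr_ge0 (fine ('E_P[W])%E); lra.
Qed.

End Pr1.

From mathcomp Require Import measurable_realfun.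
Import Order.TTheory GRing.Theory Num.Theory numFieldNormedType.Exports.

Section Pr2.
Context {d} {T : measurableType d} {R : realType} (P : probability T R).

Lemma L1_meas (X : T -> R) : X \in Lfun P 1 -> measurable_fun setT X.
Proof. by move/Lfun1_integrable => /measurable_int /measurable_EFinP. Qed.

Lemma indep_E (U V : T -> R) : U \in Lfun P 2%:E -> V \in Lfun P 2%:E ->
  (forall A B : set R, measurable A -> measurable B ->
     P (U @^-1` A `&` V @^-1` B) = (P (U @^-1` A) * P (V @^-1` B))%E) ->
  ('E_P[U * V] = 'E_P[U] * 'E_P[V])%E.
Proof.
move=> hU hV hind.
have hU1 := L2_L1 P _ hU; have hV1 := L2_L1 P _ hV.
have mU := L1_meas _ hU1; have mV := L1_meas _ hV1.
pose U' : {mfun T >-> R} := HB.pack U (isMeasurableFun.Build _ _ _ _ _ mU).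
pose V' : {mfun T >-> R} := HB.pack V (isMeasurableFun.Build _ _ _ _ _ mV).
have mphi : measurable_fun setT (fun w => (U w, V w)) := measurable_fun_pair mU mV.
pose phi' : {mfun T >-> (R * R)%type} :=
  HB.pack (fun w => (U w, V w)) (isMeasurableFun.Build _ _ _ _ _ mphi).
pose muU := distribution P U'.
pose muV := distribution P V'.
pose mu := distribution P phi'.
have hprod : forall X, measurable X -> (muU \x muV)%E X = mu X.
  apply: product_measure_unique => A B mA mB.
  exact: hind.
pose f := fun z : R * R => (z.1 * z.2)%:E.
have mf : measurable_fun setT f.
  apply/measurable_EFinP; apply: measurable_funM.
  - exact: measurable_fst.
  - exact: measurable_snd.
have iUV : P.-integrable setT (f \o phi').
  exact: (Lfun1_integrable _ _).1 (Lfun2_mul_Lfun1 hU hV).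
have iU : P.-integrable setT (EFin \o U) := (Lfun1_integrable _ _).1 hU1.
have iV : P.-integrable setT (EFin \o V) := (Lfun1_integrable _ _).1 hV1.
have imu : mu.-integrable setT f.
  exact: (integrable_pushforward mphi mf iUV measurableT).
have iprod : (muU \x muV)%E.-integrable setT f.
  apply/integrableP; split => //.
  rewrite (eq_measure_integral mu); first by case/integrableP: imu.
  by move=> A mA _; exact: hprod.
have imuV : muV.-integrable setT EFin.
  exact: (integrable_pushforward mV (@EFin_measurable _ setT) iV measurableT).
have imuU : muU.-integrable setT EFin.
  exact: (integrable_pushforward mU (@EFin_measurable _ setT) iU measurableT).
have EV : ('E_P[V] = \int[muV]_y y%:E)%E.
  by rewrite unlock integral_pushforward.
have EU : ('E_P[U] = \int[muU]_y y%:E)%E.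
  by rewrite unlock integral_pushforward.
have fEV : ('E_P[V])%E \is a fin_num := expectation_fin_num hV1.
have -> : ('E_P[U * V] = \int[mu]_z f z)%E.
  by rewrite unlock integral_pushforward.
rewrite (eq_measure_integral (muU \x muV)%E); last by move=> A mA _; apply/esym; exact: hprod.
rewrite -integral12_prod_meas1 //.
rewrite /fubini_F.
under eq_integral => x _.
  under eq_integral => y _ do rewrite /f /= EFinM.
  rewrite integralZl // -EV -(fineK fEV) -EFinM.
  over.
rewrite /=.
under eq_integral => x _ do rewrite EFinM.
by rewrite integralZr // -EU fineK.
Qed.

End Pr2.

Section Pr3.
Context {d} {T : measurableType d} {R : realType} (P : probability T R).

Lemma cv_lin2 (X1 X2 X3 X4 : T -> R) (b : R) :
  X1 \in Lfun P 2%:E -> X2 \in Lfun P 2%:E -> X3 \in Lfun P 2%:E -> X4 \in Lfun P 2%:E ->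
  cv P (X1 \+ ((- b) \o* X2)) (X3 \+ ((- b) \o* X4))
  = cv P X1 X3 - b * cv P X1 X4 - b * cv P X2 X3 + b ^+ 2 * cv P X2 X4.
Proof.
move=> h1 h2 h3 h4.
have h2' := L2Z P _ (- b) h2; have h4' := L2Z P _ (- b) h4.
have h34 := L2D P _ _ h3 h4'.
rewrite cvDl // cvDr // cvDr // cvZl // cvZl // cvZr // cvZr //.
set a1 := cv P X1 X3; set a2 := cv P X1 X4; set a3 := cv P X2 X3; set a4 := cv P X2 X4.
ring.
Qed.

Lemma sfBm_L2 {K} {X : R -> T -> R} {u} : is_sfBm P K X -> 0 <= u -> X u \in Lfun P 2%:E.
Proof. by case=> _ [_ [hL _]] hu; exact: hL. Qed.

Lemma sfBm_cv {K} {X : R -> T -> R} {u v} : is_sfBm P K X -> 0 <= u -> 0 <= v ->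
  cv P (X u) (X v) = sfBm_cov K u v.
Proof.
move=> hX hu hv; have [_ [_ [_ hc]]] := hX.
by apply: EFin_inj; rewrite -cvE ?(sfBm_L2 hX) // hc.
Qed.

Lemma psd_from {K} {X : R -> T -> R} : is_sfBm P K X -> psd3 K.
Proof.
move=> hX u1 u2 u3 c1 c2 c3 h1 h2 h3.
have L1 := sfBm_L2 hX h1; have L2 := sfBm_L2 hX h2; have L3 := sfBm_L2 hX h3.
have := cv_ge0 P ((c1 \o* X u1) \+ (c2 \o* X u2) \+ (c3 \o* X u3)).
rewrite !cvDl ?L2D ?L2Z // !cvDr ?L2D ?L2Z // !cvZl ?L2Z // !cvZr //.
rewrite !(sfBm_cv hX) //.
rewrite ?(covC K u2 u1) ?(covC K u3 u1) ?(covC K u3 u2).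
move=> H; apply: le_trans H _; apply: eqle.
set a := sfBm_cov K u1 u1; set b := sfBm_cov K u2 u2; set c := sfBm_cov K u3 u3.
set e := sfBm_cov K u1 u2; set f := sfBm_cov K u1 u3; set g := sfBm_cov K u2 u3.
ring.
Qed.

Lemma indep_pair {N} {xi : 'I_N -> R -> T -> R} {i j : 'I_N} {u v : R} :
  indep_processes P xi -> i != j -> 0 <= u -> 0 <= v ->
  forall A B : set R, measurable A -> measurable B ->
  P (xi i u @^-1` A `&` xi j v @^-1` B) = (P (xi i u @^-1` A) * P (xi j v @^-1` B))%E.
Proof.
move=> hind hij hu hv A B mA mB.
pose ts := fun (k : 'I_N) (_ : 'I_1) => if k == i then u else if k == j then v else 0.
pose Bs := fun (k : 'I_N) (_ : 'I_1) => if k == i then A else if k == j then B else setT.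
have hts : forall k m, 0 <= ts k m.
  by move=> k m; rewrite /ts; case: ifP => // _; case: ifP.
have hBs : forall k m, measurable (Bs k m).
  by move=> k m; rewrite /Bs; case: ifP => // _; case: ifP.
have := hind 1%N ts Bs hts hBs.
have hji : (j == i) = false by apply/negbTE; rewrite eq_sym.
have cap1 : forall k, \bigcap_(m in [set: 'I_1]) (xi k (ts k m) @^-1` Bs k m)
    = xi k (ts k ord0) @^-1` Bs k ord0.
  move=> k; apply/seteqP; split => w /=.
  - by move=> /(_ ord0 I).
  - by move=> h m _; rewrite (ord1 m).
have -> : \bigcap_(k in [set: 'I_N]) \bigcap_(m in [set: 'I_1])
    (xi k (ts k m) @^-1` Bs k m) = xi i u @^-1` A `&` xi j v @^-1` B.
  apply/seteqP; split => w /=.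
  - move=> h; split.
    + by have := h i I ord0 I; rewrite /ts /Bs eqxx.
    + by have := h j I ord0 I; rewrite /ts /Bs hji eqxx.
  - move=> [hA hB] k _ m _; rewrite /ts /Bs.
    case: ifP => [/eqP -> //|_]; case: ifP => [/eqP -> //|_] //.
move=> ->.
under eq_bigr do rewrite cap1.
have hji' : j != i by rewrite eq_sym.
rewrite (bigD1 i) // (bigD1 j hji') /=.
rewrite big1 ?mule1.
  by rewrite /ts /Bs eqxx hji eqxx.
move=> k /andP[hki hkj].
by rewrite /ts /Bs (negbTE hki) (negbTE hkj) preimage_setT probability_setT.
Qed.

Lemma cross_zero {N} {xi : 'I_N -> R -> T -> R} {H : 'I_N -> R} {i j : 'I_N} {u v : R} :
  (forall k, is_sfBm P (H k) (xi k)) -> indep_processes P xi -> i != j ->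
  0 <= u -> 0 <= v -> cv P (xi i u) (xi j v) = 0.
Proof.
move=> hX hind hij hu hv.
have hU := sfBm_L2 (hX i) hu; have hV := sfBm_L2 (hX j) hv.
have hE := indep_E P _ _ hU hV (indep_pair hind hij hu hv).
rewrite /cv covarianceE; first by rewrite hE subee // fin_numM // expectation_fin_num // L2_L1.
- exact: L2_L1.
- exact: L2_L1.
- exact: Lfun2_mul_Lfun1.
Qed.

End Pr3.

Theorem lemma17 (R : realType) (d : measure_display) (Omega : measurableType d)
  (P : probability Omega R) (N : nat) (H : 'I_N -> R) (a : 'I_N -> R)
  (xi : 'I_N -> R -> Omega -> R) (i0 : 'I_N) (eps T : R) :
  (0 < N)%N ->
  (forall i, 0 < H i < 1) ->
  (exists i, a i != 0) ->
  (forall i, is_sfBm P (H i) (xi i)) ->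
  indep_processes P xi ->
  a i0 != 0 -> (forall i, a i != 0 -> H i0 <= H i) ->
  0 < eps -> eps < T ->
  exists c : R, 0 < c /\
    forall s t : R, s \in `[eps, T] -> t \in `[eps, T] ->
      ((c * `|s - t| `^ (2 * H i0))%:E
        <= cond_var P (msfBm a xi t) (msfBm a xi s))%E.
Proof.
move=> _ hH _ hX hind ha0 _ he heT.
have hK := hH i0.
have hP := psd_from P (hX i0).
have [c hc hst] := st_bound _ _ _ hK hP he (ltW heT).
have ha2 : 0 < a i0 ^+ 2 by rewrite exprn_even_gt0.
exists (a i0 ^+ 2 * c); split; first exact: mulr_gt0.
move=> s t hs ht.
rewrite in_itv /= in hs; rewrite in_itv /= in ht.
have hs0 : 0 <= s by case/andP: hs => h1 _; lra.
have ht0 : 0 <= t by case/andP: ht => h1 _; lra.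
rewrite /cond_var; apply: le_ereal_inf_tmp => _ [b _ <-].
pose Y := fun i => xi i t \+ ((- b) \o* xi i s).
have eY : forall i, Y i = xi i t \+ ((- b) \o* xi i s) by [].
have LY : forall i, Y i \in Lfun P 2%:E.
  move=> i; rewrite eY.
  have h1 := sfBm_L2 P (hX i) ht0; have h2 := sfBm_L2 P (hX i) hs0.
  exact: (L2D P _ _ h1 (L2Z P _ (- b) h2)).
have LY0 := LY i0.
pose W := \sum_(i < N) (a i \o* Y i).
have LW : W \in Lfun P 2%:E by apply: L2_sum => i; apply: L2Z; exact: LY.
have eW : (fun w => (msfBm a xi t w - b * msfBm a xi s w) ^+ 2) = (fun w => (W w) ^+ 2).
  apply/funext => w; congr (_ ^+ 2).
  rewrite /W /msfBm fct_sumE /= mulr_sumr -sumrB; apply: eq_bigr => i _ /=.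
  rewrite /Y /=; ring.
rewrite eW; apply: le_trans _ (E_sq_ge P _ LW); rewrite lee_fin.
pose A := a i0 \o* Y i0.
pose Z := \sum_(i < N | i != i0) (a i \o* Y i).
have LA : A \in Lfun P 2%:E by apply: L2Z.
have LZ : Z \in Lfun P 2%:E by apply: L2_sum => i; apply: L2Z; exact: LY.
have eW2 : W = A \+ Z by rewrite /W (bigD1 i0).
have Lt := sfBm_L2 P (hX i0) ht0; have Ls := sfBm_L2 P (hX i0) hs0.
have cross : forall i, i != i0 -> cv P (Y i0) (Y i) = 0.
  move=> i hi; have hi' : i0 != i by rewrite eq_sym.
  have Lti := sfBm_L2 P (hX i) ht0; have Lsi := sfBm_L2 P (hX i) hs0.
  rewrite !eY cv_lin2 //.
  by rewrite !(cross_zero P hX hind hi') //; ring.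
have eAZ : cv P A Z = 0.
  rewrite /Z cv_sumr //; last by move=> i; apply: L2Z; exact: LY.
  apply: big1 => i hi.
  have LYi := LY i.
  by rewrite /A cvZl // ?L2Z // cvZr // ?L2Z // cross // !mulr0.
have eAA : cv P A A = a i0 ^+ 2 *
    (sfBm_cov (H i0) t t - 2 * b * sfBm_cov (H i0) t s + b ^+ 2 * sfBm_cov (H i0) s s).
  rewrite /A cvZl // cvZr // eY cv_lin2 //.
  rewrite !(sfBm_cv P (hX i0)) // (covC (H i0) s t).
  set g1 := sfBm_cov _ t t; set g2 := sfBm_cov _ t s; set g3 := sfBm_cov _ s s.
  ring.
have eW3 : cv P W W = cv P A A + cv P Z Z.
  have LAZ := L2D P _ _ LA LZ.
  rewrite eW2 cvDl // !cvDr // eAZ (cvC P Z A) eAZ.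
  by rewrite addr0 add0r.
rewrite eW3 eAA.
have hZ := cv_ge0 P Z.
have hQ := hst s t b hs ht.
move: hQ hZ.
set Q := sfBm_cov _ t t - _ + _; set w := `|s - t| `^ _; set z := cv P Z Z.
move=> hQ hZ.
have h1 : a i0 ^+ 2 * (c * w) <= a i0 ^+ 2 * Q := ler_wpM2l (ltW ha2) hQ.
rewrite -mulrA; lra.
Qed.
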